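(* Let $(\Gamma,\rho)$ be a voltage graph with $\Gamma=(V,E)$ a rooted simple digraph on vertices $V=\{v_1,\dots,v_N\}$ and voltage group $G$ a point group in dimension $k$ (a finite subgroup of $\mathrm{O}(k)$). Write $\theta_{ij}:=\rho(e_{ij})$ for $e_{ij}\in E$, and let $a_{ij}>0$ be positive constants. Consider the $G$-clustering dynamics on $p=(x_1,\dots,x_N)\in\mathbb{R}^{kN}$, $x_i\in\mathbb{R}^k$: $$\dot x_i=\sum_{v_j\in\mathcal{N}^-(v_i)}a_{ij}\,(\theta_{ij}x_j-x_i),\qquad i=1,\dots,N.$$ Let $\{G_i\}_{v_i\in V}$ be the local groups and $\{G_i^*\}_{v_i\in V}$ the directed local groups of $(\Gamma,\rho)$. Suppose that $G_i=G_i^*$ for some (and hence any) root $v_i$ of $\Gamma$. Then for any initial condition $p(0)\in\mathbb{R}^{kN}$, the trajectory $p(t)$ converges exponentially fast to a configuration $p^*=(x_1^*,\dots,x_N^* )$ satisfying: (1) for each edge $e_{ij}\in E$, $x_i^*=\theta_{ij}x_j^*$; in particular $\|x_1^*\|=\dots=\|x_N^*\|$; (2) for each $v_i\in V$, $\theta x_i^*=x_i^*$ for all $\theta\in G_i$.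
   Context: Digraphs are simple (no self-loops, no multiple edges); $e_{ij}$ denotes the edge $v_i\to v_j$. $\mathcal{N}^-(v_i)=\{v_j: e_{ij}\in E\}$ is the set of out-neighbors of $v_i$. A voltage graph is a pair $(\Gamma,\rho)$ with $\rho:E\to G$, $G$ a finite group with identity $\mathbf{1}$. A semi-walk is an alternating sequence $w=v_{i_1}a_1v_{i_2}\dots a_{n-1}v_{i_n}$ ($n\ge1$) where each $a_j$ is either $e_{i_ji_{j+1}}$ or $e_{i_{j+1}i_j}$; it goes from $v_{i_1}$ to $v_{i_n}$, is closed if $v_{i_1}=v_{i_n}$, and is a walk if every $a_j=e_{i_ji_{j+1}}$. A path is a walk with pairwise distinct vertices. The net voltage is $f(w)=\bar\rho(a_1)\cdots\bar\rho(a_{n-1})$ with $\bar\rho(a_j)=\rho(a_j)$ if $a_j=e_{i_ji_{j+1}}$ and $\bar\rho(a_j)=\rho(a_j)^{-1}$ otherwise ($f=\mathbf{1}$ for the one-vertex semi-walk). The local group at $v_i$ is $G_i=\{f(w): w$ a closed semi-walk starting and ending at $v_i\}$; the directed local group is $G_i^*=\{f(w): w$ a closed walk starting and ending at $v_i\}$. $\Gamma$ is rooted if there is a vertex $v_r$ (a root) such that every vertex has a path to $v_r$. *)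

(* Defs.v *)
From HB Require Import structures.
From mathcomp Require Import all_boot all_order all_algebra.
From mathcomp Require Import all_classical all_reals all_analysis.
Set Implicit Arguments. Unset Strict Implicit. Unset Printing Implicit Defensive.
Import Order.TTheory GRing.Theory Num.Theory.
Import numFieldNormedType.Exports.
Local Open Scope ring_scope.

(* Vertices are 'I_N; the simple digraph is an irreflexive relation
   [e : rel 'I_N] with [e i j] meaning the edge e_ij : v_i -> v_j.
   The voltage assignment is [rho : 'I_N -> 'I_N -> 'M[R]_k], only
   meaningful on edges.  A semi-walk starting at [u] is encoded by the
   sequence of its steps [(w, b)]: [b = true] means the step traverses the
   edge e_{u w} forwards, [b = false] means it traverses e_{w u} backwards. *)
Section VoltageGraph.
Variables (R : realType) (N k : nat).
Variables (e : rel 'I_N) (rho : 'I_N -> 'I_N -> 'M[R]_k).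

Fixpoint semiwalk_ok (u : 'I_N) (s : seq ('I_N * bool)) : bool :=
  match s with
  | [::] => true
  | (w, b) :: s' => (if b then e u w else e w u) && semiwalk_ok w s'
  end.

Definition sw_end (u : 'I_N) (s : seq ('I_N * bool)) : 'I_N :=
  last u (map fst s).

Definition is_walk (s : seq ('I_N * bool)) : bool := all snd s.

Fixpoint sw_volt (u : 'I_N) (s : seq ('I_N * bool)) : 'M[R]_k :=
  match s with
  | [::] => 1%:M
  | (w, b) :: s' =>
      (if b then rho u w else invmx (rho w u)) *m sw_volt w s'
  end.

Definition local_group (i : 'I_N) (A : 'M[R]_k) : Prop :=
  exists s, [/\ semiwalk_ok i s, sw_end i s = i & sw_volt i s = A].

Definition dlocal_group (i : 'I_N) (A : 'M[R]_k) : Prop :=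
  exists s, [/\ semiwalk_ok i s, is_walk s, sw_end i s = i & sw_volt i s = A].

Definition is_path_from_to (i j : 'I_N) : Prop :=
  exists s, [/\ semiwalk_ok i s, is_walk s, uniq (i :: map fst s)
              & sw_end i s = j].

Definition is_root (r : 'I_N) : Prop := forall i, is_path_from_to i r.

Definition rooted : Prop := exists r, is_root r.

End VoltageGraph.

Definition point_group (R : realType) (k : nat) (G : seq 'M[R]_k) : Prop :=
  [/\ (1%:M : 'M[R]_k) \in G,
      (forall A B, A \in G -> B \in G -> A *m B \in G),
      (forall A, A \in G -> invmx A \in G)
    & (forall A, A \in G -> A *m A^T = 1%:M)].

(* Main.v *)
Require Import Defs.
From HB Require Import structures.
From mathcomp Require Import all_boot all_order all_algebra.
From mathcomp Require Import all_classical all_reals all_analysis.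
From mathcomp Require Import ring lra.
Import Order.TTheory GRing.Theory Num.Theory.
Import numFieldNormedType.Exports.
Local Open Scope ring_scope.

Module PA.
Local Open Scope ring_scope.
Local Open Scope classical_set_scope.

Section A.
Context {R : realType}.

Lemma is_derive_sumseq (T : Type) (s : seq T) (f : T -> R -> R) (df : T -> R) (t : R) :
  (forall i, is_derive t (1:R) (f i) (df i)) ->
  is_derive t (1:R) (fun u => \sum_(i <- s) f i u) (\sum_(i <- s) df i).
Proof.
move=> H; elim: s => [|a s IH].
  rewrite big_nil; under [fun u => _]funext => u do rewrite big_nil.
  exact: is_derive_cst.
rewrite big_cons; under [fun u => _]funext => u do rewrite big_cons.
have := is_deriveD (H a) IH; by [].
Qed.

Lemma mono_derive (f df : R -> R) a b :
  (forall s, is_derive s (1:R) f (df s)) ->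
  (forall s, a <= s <= b -> 0 <= df s) -> a <= b -> f a <= f b.
Proof.
move=> Hd Hpos ab.
apply: (@ger0_derive1_ndecr R f a b) => //.
- move=> x; rewrite in_itv /= => /andP[ax xb].
  rewrite derive1E (@derive_val _ _ _ _ _ _ _ (Hd x)); apply: Hpos; by rewrite !ltW.
- apply: continuous_subspaceT => x.
  apply: differentiable_continuous; apply/derivable1_diffP; exact: (@ex_derive _ _ _ _ _ _ _ (Hd x)).
Qed.

End A.
Arguments is_derive_sumseq {R T s f df t}.
Arguments mono_derive {R f df a b}.

Section A2.
Context {R : realType}.

Lemma is_derive_quad (f : R -> R) (t d C : R) :
  (forall h, `|f (h + t) - f t - d * h| <= C * h ^+ 2) -> is_derive t (1:R) f d.
Proof.
move=> H.
have cv : (fun h : R => h^-1 *: (f (h *: 1 + t) - f t)) @ 0^' --> d.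
  apply/cvgrPdist_le => e e0.
  have C0 : 0 <= C by have := H 1; rewrite expr1n !mulr1 => HH; exact: le_trans (normr_ge0 _) HH.
  near=> h.
  have h0 : h != 0 by near: h; exact: nbhs_dnbhs_neq.
  have hs : `|h| <= e / (C + 1).
    near: h; apply: dnbhs0_le; apply: divr_gt0 => //; exact: ltr_wpDl.
  have -> : d - h^-1 *: (f (h *: 1 + t) - f t) = - (h^-1 * (f (h + t) - f t - d * h)).
    rewrite -[h%:A]/(h * 1) mulr1 -[_ *: _]/(_ * _); field; exact: h0.
  rewrite normrN normrM normfV.
  have hp : 0 < `|h| by rewrite normr_gt0.
  rewrite ler_pdivrMl //.
  apply: (le_trans (H h)).
  have hs' : `|h| * (C + 1) <= e by rewrite -ler_pdivlMr ?ltr_wpDl.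
  rewrite -(real_normK (num_real h)).
  nra.
apply: DeriveDef; first by apply/cvg_ex; exists d.
exact: cvg_lim cv.
Unshelve. all: by end_near.
Qed.

End A2.

Section A3.
Context {R : realType}.
Definition psi (u : R) := (Num.max u 0) ^+ 2.

Lemma psi_quad u h : `|psi (h + u) - psi u - 2 * Num.max u 0 * h| <= 1 * h ^+ 2.
Proof.
rewrite /psi mul1r ler_norml; case: (leP (h + u) 0) => Hhu; case: (leP u 0) => Hu;
  rewrite ?(max_r Hhu) ?(max_r Hu) ?(max_l (ltW Hhu)) ?(max_l (ltW Hu));
  apply/andP; split; nra.
Qed.

Lemma is_derive_psi u : is_derive u (1:R) psi (2 * Num.max u 0).
Proof. apply: (@is_derive_quad _ _ _ _ 1) => h; exact: psi_quad. Qed.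

Lemma psi_conv a b : 2 * Num.max a 0 * (b - a) <= psi b - psi a.
Proof.
rewrite /psi; case: (leP a 0) => Ha; case: (leP b 0) => Hb;
  rewrite ?(max_r Ha) ?(max_r Hb) ?(max_l (ltW Ha)) ?(max_l (ltW Hb)); have := sqr_ge0 (b - a); nra.
Qed.

Lemma psi_ge0 u : 0 <= psi u.
Proof. exact: sqr_ge0. Qed.

Lemma psi_eq0 u : psi u <= 0 -> u <= 0.
Proof.
move=> H; rewrite leNgt; apply/negP => Hu.
move: H; rewrite /psi (max_l (ltW Hu)) => H; have : 0 < u ^+ 2 by rewrite exprn_gt0.
by rewrite ltNge H.
Qed.
End A3.

Section A4.
Context {R : realType}.
Implicit Types (f g : R -> R) (t c a df dg : R).

Lemma is_derive_subc f t c df : is_derive t (1:R) f df ->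
  is_derive t (1:R) (fun s => f s - c) df.
Proof.
move=> H; have := is_deriveB H (is_derive_cst c t 1); rewrite subr0.
by have -> : (f - cst c) = (fun s => f s - c) by apply: funext.
Qed.

Lemma is_derive_opp f t df : is_derive t (1:R) f df ->
  is_derive t (1:R) (fun s => - f s) (- df).
Proof.
move=> H; have := is_deriveN H.
by have -> : (- f) = (fun s => - f s) by apply: funext.
Qed.

Lemma is_derive_mul f g t df dg : is_derive t (1:R) f df -> is_derive t (1:R) g dg ->
  is_derive t (1:R) (fun s => f s * g s) (f t * dg + g t * df).
Proof.
move=> Hf Hg; have := is_deriveM Hf Hg.
by have -> : (f * g) = (fun s => f s * g s) by apply: funext.
Qed.

Lemma is_derive_lin t c a : is_derive t (1:R) (fun s => c * (s - a)) c.
Proof.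
have H := is_deriveZ c (@is_derive_subc id t a 1 (is_derive_id t (1:R))).
rewrite -[c *: 1]/(c * 1) mulr1 in H.
by have <- : (c \*: (fun s => id s - a)) = (fun s => c * (s - a)) by apply: funext.
Qed.

Lemma is_derive_expl t c a :
  is_derive t (1:R) (fun s => expR (c * (s - a))) (expR (c * (t - a)) * c).
Proof. exact: (is_derive1_comp (is_derive_expR _) (is_derive_lin t c a)). Qed.

Lemma is_derive_psic f t df M : is_derive t (1:R) f df ->
  is_derive t (1:R) (fun s => psi (f s - M)) (2 * Num.max (f t - M) 0 * df).
Proof.
move=> H; exact: (is_derive1_comp (is_derive_psi _) (@is_derive_subc f t M df H)).
Qed.

Lemma is_derive_sub f g t df dg : is_derive t (1:R) f df -> is_derive t (1:R) g dg ->
  is_derive t (1:R) (fun s => f s - g s) (df - dg).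
Proof.
move=> Hf Hg; have := is_deriveB Hf Hg.
by have -> : (f - g) = (fun s => f s - g s) by apply: funext.
Qed.

Lemma grow_lb (z dz : R -> R) (D b s0 s1 : R) :
  (forall s, is_derive s (1:R) z (dz s)) -> 0 <= D -> 0 <= b ->
  (forall s, s0 <= s <= s1 -> b - D * z s <= dz s) -> s0 <= s1 ->
  expR (- D * (s1 - s0)) * (z s0 + b * (s1 - s0)) <= z s1.
Proof.
move=> Hz D0 b0 Hdz s01.
pose f s := expR (D * (s - s0)) * z s - b * (s - s0).
have fd s : is_derive s (1:R) f (expR (D * (s - s0)) * dz s + z s * (expR (D * (s - s0)) * D) - b).
  exact: (@is_derive_sub _ _ s _ _) (@is_derive_mul _ _ s _ _ (is_derive_expl s D s0) (Hz s)) (is_derive_lin s b s0).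
have fpos : forall s, s0 <= s <= s1 -> 0 <= expR (D * (s - s0)) * dz s + z s * (expR (D * (s - s0)) * D) - b.
  move=> s /andP[ss0 ss1].
  have e1 : 1 <= expR (D * (s - s0)).
    by rewrite -expR0 ler_expR; apply: mulr_ge0 => //; rewrite subr_ge0.
  have := Hdz s; rewrite ss0 ss1 => /(_ isT) Hs.
  have e0 : 0 < expR (D * (s - s0)) by apply: expR_gt0.
  nra.
have := mono_derive fd fpos s01.
rewrite /f subrr mulr0 expR0 mul1r => H.
have : z s0 + b * (s1 - s0) <= expR (D * (s1 - s0)) * z s1 by lra.
rewrite -(@ler_pM2l _ (expR (- D * (s1 - s0)))) ?expR_gt0 // mulrA -expRD.
by rewrite mulNr addNr expR0 mul1r.
Qed.

End A4.
Arguments is_derive_subc {R f t} c {df}.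
Arguments is_derive_opp {R f t df}.
Arguments is_derive_mul {R f g t df dg}.
Arguments is_derive_psic {R f t df} M.
Arguments is_derive_quad {R f t d} C.
Arguments is_derive_sub {R f g t df dg}.
Arguments grow_lb {R z dz D b s0 s1}.

End PA.
Import PA.

Module PB.
Local Open Scope ring_scope.

Section Cons.
Variables (R : realType) (I K : finType) (w : I -> K -> R) (nb : I -> K -> I).
Hypothesis w_ge0 : forall n k, 0 <= w n k.

Definition cons_sol (y : I -> R -> R) := forall n t,
  is_derive t (1:R) (y n) (\sum_k w n k * (y (nb n k) t - y n t)).

Lemma cons_solN y : cons_sol y -> cons_sol (fun n t => - y n t).
Proof.
move=> Hy n t; have := is_derive_opp (Hy n t).
set a := - _; set b := \sum_k _; have -> // : a = b.
by rewrite /a /b -sumrN; apply: eq_bigr => k _; ring.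
Qed.

Lemma single_le_sum (F : I -> R) n : (forall i, 0 <= F i) -> F n <= \sum_i F i.
Proof.
move=> H; rewrite (bigD1 n) //= lerDl; apply: sumr_ge0 => i _; exact: H.
Qed.

Lemma inv_up y t0 M0 : cons_sol y -> (forall n, y n t0 <= M0) ->
  forall s, t0 <= s -> forall n, y n s <= M0.
Proof.
move=> Hy H0 s ts n.
pose Kc := \sum_n \sum_k w n k.
have Kc0 : 0 <= Kc by apply: sumr_ge0 => i _; apply: sumr_ge0 => k _.
pose W s := \sum_n psi (y n s - M0).
pose dW s := \sum_n 2 * Num.max (y n s - M0) 0 * (\sum_k w n k * (y (nb n k) s - y n s)).
have dWd s' : is_derive s' (1:R) W (dW s').
  exact: is_derive_sumseq (fun n => is_derive_psic M0 (Hy n s')).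
have W0 s' : 0 <= W s' by apply: sumr_ge0 => i _; exact: psi_ge0.
have key s' : dW s' <= Kc * W s'.
  rewrite /dW /Kc mulr_suml; apply: ler_sum => m _.
  rewrite mulr_sumr mulr_suml; apply: ler_sum => k _.
  rewrite mulrCA; apply: ler_wpM2l => //.
  rewrite (_ : y (nb m k) s' - y m s' = (y (nb m k) s' - M0) - (y m s' - M0)); last by ring.
  apply: le_trans (psi_conv _ _) _.
  rewrite lerBlDr; apply: le_trans (@single_le_sum (fun i => psi (y i s' - M0)) (nb m k) (fun i => psi_ge0 _)) _.
  by rewrite lerDl psi_ge0.
pose V s := - (expR (- Kc * (s - t0)) * W s).
have Vd s' : is_derive s' (1:R) V
    (- (expR (- Kc * (s' - t0)) * dW s' + W s' * (expR (- Kc * (s' - t0)) * - Kc))).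
  exact: is_derive_opp (is_derive_mul (is_derive_expl s' (- Kc) t0) (dWd s')).
have Vpos : forall s', t0 <= s' <= s -> 0 <= - (expR (- Kc * (s' - t0)) * dW s' + W s' * (expR (- Kc * (s' - t0)) * - Kc)).
  move=> s' _; rewrite oppr_ge0.
  have e0 := expR_gt0 (- Kc * (s' - t0)).
  have := key s'; nra.
have := mono_derive Vd Vpos ts.
have Wt0 : W t0 = 0.
  apply: big1 => i _; rewrite /psi max_r ?expr0n //; rewrite subr_le0; exact: H0.
rewrite /V Wt0 mulr0 oppr0 oppr_ge0 pmulr_rle0 ?expR_gt0 // => Ws.
have : psi (y n s - M0) <= 0.
  apply: le_trans _ Ws; exact: (@single_le_sum (fun i => psi (y i s - M0)) n (fun i => psi_ge0 _)).
by move/psi_eq0; rewrite subr_le0.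
Qed.

Lemma inv_low y t0 m0 : cons_sol y -> (forall n, m0 <= y n t0) ->
  forall s, t0 <= s -> forall n, m0 <= y n s.
Proof.
move=> Hy H0 s ts n.
have := @inv_up (fun n t => - y n t) t0 (- m0) (@cons_solN y Hy) _ s ts n.
rewrite lerN2; apply => i; rewrite lerN2; exact: H0.
Qed.

Lemma single_le_sumK (F : K -> R) k : (forall i, 0 <= F i) -> F k <= \sum_i F i.
Proof.
move=> H; rewrite (bigD1 k) //= lerDl; apply: sumr_ge0 => i _; exact: H.
Qed.

Variables (hub : I) (L : nat) (alpha D : R).
Hypothesis alpha_gt0 : 0 < alpha.
Hypothesis alpha_le : forall n k, 0 < w n k -> alpha <= w n k.
Hypothesis D_ge0 : 0 <= D.
Hypothesis D_ge : forall n, \sum_k w n k <= D.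

Fixpoint reachn (l : nat) (n : I) : Prop :=
  match l with
  | 0 => n = hub
  | l'.+1 => exists k, 0 < w n k /\ reachn l' (nb n k)
  end.

Hypothesis reach : forall n, exists l, (l <= L)%N /\ reachn l n.

Definition cc := Num.min 1 (alpha * expR (- D * L%:R)).

Lemma cc_gt0 : 0 < cc.
Proof. by rewrite /cc lt_min ltr01 mulr_gt0 // expR_gt0. Qed.

Lemma cc_le1 : cc <= 1.
Proof. by rewrite /cc ge_min lexx. Qed.

Lemma cc_le : cc <= alpha * expR (- D * L%:R).
Proof. by rewrite /cc ge_min lexx orbT. Qed.

Lemma window y t M0 m0 : cons_sol y -> (forall n, m0 <= y n t <= M0) ->
  y hub t <= (M0 + m0) / 2 ->
  forall n, y n (t + L%:R) <= M0 - cc ^+ L * expR (- D * L%:R) * ((M0 - m0) / 2).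
Proof.
move=> Hy Hb Hhub.
pose z n s := M0 - y n s.
have zge0 n s : t <= s -> 0 <= z n s.
  move=> ts; rewrite /z subr_ge0; apply: (@inv_up y t M0 Hy _ s ts n) => i.
  by case/andP: (Hb i).
have zd n s : is_derive s (1:R) (z n) (\sum_k w n k * (z (nb n k) s - z n s)).
  have := is_derive_opp (is_derive_subc M0 (Hy n s)).
  have -> : - \sum_k w n k * (y (nb n k) s - y n s) = \sum_k w n k * (z (nb n k) s - z n s).
    by rewrite -sumrN; apply: eq_bigr => k _; rewrite /z; ring.
  have -> // : (fun s0 => - (y n s0 - M0)) = z n.
  by apply: funext => s0; rewrite /z; ring.
have zsplit n s : \sum_k0 w n k0 * (z (nb n k0) s - z n s) =
      \sum_k0 w n k0 * z (nb n k0) s - (\sum_k0 w n k0) * z n s.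
    by rewrite mulr_suml -sumrB; apply: eq_bigr => k0 _; ring.
have zlb n k s : t <= s ->
    w n k * z (nb n k) s - D * z n s <= \sum_k w n k * (z (nb n k) s - z n s).
  move=> ts; rewrite zsplit.
  apply: lerB.
    apply: (@single_le_sumK (fun k0 => w n k0 * z (nb n k0) s)) => i.
    by apply: mulr_ge0 => //; apply: zge0.
  by apply: ler_wpM2r => //; apply: zge0.
have zlb0 n s : t <= s -> - (D * z n s) <= \sum_k w n k * (z (nb n k) s - z n s).
  move=> ts; rewrite zsplit -sub0r.
  apply: lerB.
    by apply: sumr_ge0 => i _; apply: mulr_ge0 => //; apply: zge0.
  by apply: ler_wpM2r => //; apply: zge0.
have eDL s : s <= L%:R -> expR (- D * L%:R) <= expR (- D * s).
  by move=> sL; rewrite ler_expR !mulNr lerN2 ler_wpM2l.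
have zh0 : 0 <= z hub t by apply: zge0.
have claim : forall l n, reachn l n -> (l <= L)%N -> forall s, t + l%:R <= s <= t + L%:R ->
    cc ^+ l * expR (- D * L%:R) * z hub t <= z n s.
  elim=> [|l IH] n /=.
    move=> -> _ s /andP[ts sL]; rewrite addr0 in ts; rewrite expr0 mul1r.
    have := @grow_lb R (z hub) _ D 0 t s (zd hub) D_ge0 (lexx 0) _ ts.
    rewrite mul0r addr0 => /(_ _) H.
    apply: le_trans (H _); last first.
      move=> u /andP[tu _]; rewrite sub0r.
      exact: zlb0.
    by apply: ler_wpM2r => //; apply: eDL; lra.
  move=> [k [wpos rk]] lL s /andP[ls sL].
  set e := expR (- D * L%:R).
  have e0 : 0 <= e by apply: ltW; apply: expR_gt0.
  set dl := cc ^+ l * e * z hub t.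
  have dl0 : 0 <= dl by apply: mulr_ge0 => //; apply: mulr_ge0 => //; apply: exprn_ge0; apply: ltW; apply: cc_gt0.
  have Hnb u : t + l%:R <= u <= t + L%:R -> dl <= z (nb n k) u.
    exact: IH _ rk (ltnW lL) u.
  have lS : l.+1%:R = l%:R + 1 :> R by rewrite -natr1.
  have LS : (l.+1%:R : R) <= L%:R by rewrite ler_nat.
  have s0s : t + l%:R <= s by rewrite lS in ls; lra.
  have ad0 : 0 <= alpha * dl by apply: mulr_ge0 => //; apply: ltW.
  have := @grow_lb R (z n) _ D (alpha * dl) (t + l%:R) s (zd n) D_ge0 ad0 _ s0s.
  have Hc : forall u, t + l%:R <= u <= s ->
      alpha * dl - D * z n u <= \sum_k w n k * (z (nb n k) u - z n u).
    move=> u /andP[lu us].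
    have tu : t <= u by apply: le_trans lu; rewrite lerDl.
    apply: le_trans (zlb n k u tu); apply: lerB => //.
    apply: ler_pM => //; first exact: ltW.
      exact: alpha_le.
    by apply: Hnb; rewrite lu /=; apply: le_trans sL.
  move=> /(_ Hc) H.
  apply: le_trans H.
  have zs0 : 0 <= z n (t + l%:R) by apply: zge0; rewrite lerDl.
  set E := expR (- D * (s - (t + l%:R))).
  have eE : e <= E by apply: eDL; have l0 : (0:R) <= l%:R := ler0n _ _; lra.
  have X1 : 1 <= s - (t + l%:R) by rewrite lS in ls; lra.
  have ce := cc_le.
  have c0 : 0 <= cc by apply: ltW; apply: cc_gt0.
  have -> : cc ^+ l.+1 * e * z hub t = cc * dl by rewrite /dl exprS; ring.
  have h1 : cc * dl <= alpha * e * dl by apply: ler_wpM2r.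
  apply: le_trans h1 _.
  have h2 : alpha * e * dl <= E * (alpha * dl) by rewrite mulrAC [E * _]mulrC ler_wpM2l.
  apply: le_trans h2 _.
  have E0 : 0 <= E by apply: ltW; apply: expR_gt0.
  apply: ler_wpM2l => //.
  nra.
move=> n; have [l [lL rl]] := reach n.
have lLr : (l%:R : R) <= L%:R by rewrite ler_nat.
have := claim l n rl lL (t + L%:R).
rewrite lerD2l lLr lexx /= => /(_ isT) H.
have Hh := Hb hub.
have zh : (M0 - m0) / 2 <= z hub t by rewrite /z; lra.
have c0 : 0 <= cc by apply: ltW; apply: cc_gt0.
have cL : cc ^+ L <= cc ^+ l by apply: ler_wiXn2l => //; exact: cc_le1.
have e0 : 0 <= expR (- D * L%:R) by apply: ltW; apply: expR_gt0.
have mm : 0 <= (M0 - m0) / 2 by case/andP: Hh => ? ?; lra.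
suff : cc ^+ L * expR (- D * L%:R) * ((M0 - m0) / 2) <= z n (t + L%:R) by rewrite /z; lra.
apply: le_trans H.
apply: ler_pM => //.
- by apply: mulr_ge0 => //; apply: exprn_ge0.
- by apply: ler_wpM2r.
Qed.

Definition Mx (y : I -> R -> R) t := \big[Num.max/y hub t]_n y n t.
Definition mn (y : I -> R -> R) t := \big[Num.min/y hub t]_n y n t.

Lemma Mx_ge y t n : y n t <= Mx y t.
Proof. exact: le_bigmax. Qed.
Lemma mn_le y t n : mn y t <= y n t.
Proof. exact: bigmin_le. Qed.
Lemma Mx_le y t B : (forall n, y n t <= B) -> Mx y t <= B.
Proof. by move=> H; apply: bigmax_le => // i _; apply: H. Qed.
Lemma mn_ge y t B : (forall n, B <= y n t) -> B <= mn y t.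
Proof. by move=> H; apply: le_bigmin => // i _; apply: H. Qed.

Lemma Mx_mono y t s : cons_sol y -> t <= s -> Mx y s <= Mx y t.
Proof. move=> Hy ts; apply: Mx_le => n; apply: (@inv_up y t (Mx y t) Hy _ s ts) => i; exact: Mx_ge. Qed.
Lemma mn_mono y t s : cons_sol y -> t <= s -> mn y t <= mn y s.
Proof. move=> Hy ts; apply: mn_ge => n; apply: (@inv_low y t (mn y t) Hy _ s ts) => i; exact: mn_le. Qed.

Definition beta := cc ^+ L * expR (- D * L%:R) / 2.

Lemma beta_gt0 : 0 < beta.
Proof.
rewrite /beta; apply: divr_gt0 => //; apply: mulr_gt0; last exact: expR_gt0.
exact: exprn_gt0 cc_gt0.
Qed.

Lemma beta_le : beta <= 1 / 2.
Proof.
rewrite /beta ler_pM2r // -[1]mulr1; apply: ler_pM.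
- by apply: exprn_ge0; apply: ltW; apply: cc_gt0.
- by apply: ltW; apply: expR_gt0.
- by apply: exprn_ile1; [apply: ltW; apply: cc_gt0 | apply: cc_le1].
- rewrite -expR0 ler_expR mulNr oppr_le0; apply: mulr_ge0 => //.
Qed.

Lemma spread_step y t : cons_sol y ->
  Mx y (t + L%:R) - mn y (t + L%:R) <= (1 - beta) * (Mx y t - mn y t).
Proof.
move=> Hy.
set M0 := Mx y t; set m0 := mn y t.
have Hb n : m0 <= y n t <= M0 by rewrite mn_le Mx_ge.
have tL : t <= t + L%:R by rewrite lerDl.
have hb := Hb hub.
case: (leP (y hub t) ((M0 + m0) / 2)) => Hh.
  have W := @window y t M0 m0 Hy Hb Hh.
  have H1 : Mx y (t + L%:R) <= M0 - beta * (M0 - m0).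
    apply: Mx_le => n; apply: le_trans (W n) _; rewrite /beta; apply: lerB => //.
    by rewrite mulrA [_ / 2 * _]mulrAC.
  have H2 : m0 <= mn y (t + L%:R) by apply: mn_ge => n; apply: (@inv_low y t m0 Hy _ _ tL) => i; exact: mn_le.
  lra.
have Hb' n : - M0 <= - y n t <= - m0 by rewrite !lerN2 andbC Hb.
have Hh' : - y hub t <= (- m0 + - M0) / 2 by lra.
have W := @window _ t (- m0) (- M0) (@cons_solN y Hy) Hb' Hh'.
have H1 : m0 + beta * (M0 - m0) <= mn y (t + L%:R).
  apply: mn_ge => n; have := W n; rewrite /beta.
  have -> : - m0 - cc ^+ L * expR (- D * L%:R) * ((- m0 - - M0) / 2) =
    - (m0 + cc ^+ L * expR (- D * L%:R) / 2 * (M0 - m0)) by ring.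
  by rewrite lerN2.
have H2 : Mx y (t + L%:R) <= M0 by apply: Mx_le => n; apply: (@inv_up y t M0 Hy _ _ tL) => i; exact: Mx_ge.
lra.
Qed.

Lemma cons_conv y : cons_sol y -> (0 < L)%N ->
  exists Lc C lam, 0 < lam /\
    forall n t, 0 <= t -> `|y n t - Lc| <= C * expR (- (lam * t)).
Proof.
move=> Hy L0.
pose sg t := Mx y t - mn y t.
have sg0 t : 0 <= sg t.
  by rewrite /sg subr_ge0; apply: le_trans (mn_le y t hub) (Mx_ge y t hub).
have sgmono t s : t <= s -> sg s <= sg t.
  move=> ts; rewrite /sg; apply: lerB; [exact: Mx_mono | exact: mn_mono].
set q := 1 - beta.
have q0 : 0 < q by have := beta_le; rewrite /q; lra.
have q1 : q < 1 by have := beta_gt0; rewrite /q; lra.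
have Lr : (0 : R) < L%:R by rewrite ltr0n.
have iter N : sg (N%:R * L%:R) <= q ^+ N * sg 0.
  elim: N => [|N IH]; first by rewrite mul0r expr0 mul1r.
  have -> : N.+1%:R * L%:R = N%:R * L%:R + L%:R :> R by rewrite -natr1 mulrDl mul1r.
  apply: le_trans (spread_step y (N%:R * L%:R) Hy) _.
  by rewrite exprS -mulrA ler_wpM2l // ltW.
have lnq : ln q < 0 by apply: ln_lt0; rewrite q0 q1.
set lam := - ln q / L%:R.
have lam0 : 0 < lam by rewrite /lam divr_gt0 // oppr_gt0.
pose E : set R := fun x => exists2 s, 0 <= s & x = mn y s.
have hsE : has_sup E.
  split; first by exists (mn y 0); exists 0.
  exists (Mx y 0); rewrite /ubound /= => x [s s0 ->].
  by apply: le_trans (mn_le y s hub) _; apply: le_trans (Mx_ge y s hub) _; exact: Mx_mono.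
exists (sup E), (sg 0 / q), lam; split => // n t t0.
have mnE : mn y t <= sup E by apply: sup_upper_bound => //; exists t.
have EMx : sup E <= Mx y t.
  apply: ge_sup; first by case: hsE.
  move=> x [s s0 ->]; case: (leP s t) => st.
    by apply: le_trans (@mn_mono y s t Hy st) _; apply: le_trans (mn_le y t hub) (Mx_ge y t hub).
  apply: le_trans (mn_le y s hub) _; apply: le_trans (Mx_ge y s hub) _.
  by apply: Mx_mono => //; exact: ltW.
have yb : `|y n t - sup E| <= sg t.
  have := mn_le y t n; have := Mx_ge y t n; rewrite /sg ler_norml => *.
  apply/andP; split; lra.
apply: le_trans yb _.
set N := Num.trunc (t / L%:R).
have tL0 : 0 <= t / L%:R by apply: divr_ge0 => //; exact: ltW.
have NL : N%:R <= t / L%:R by rewrite truncn_le.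
have NS : t / L%:R < N.+1%:R by apply: truncnS_gt.
have NLt : N%:R * L%:R <= t by rewrite -ler_pdivlMr.
apply: le_trans (sgmono _ _ NLt) _.
apply: le_trans (iter N) _.
have -> : q ^+ N = expR (N%:R * ln q) by rewrite expRM_natl lnK // posrE.
have H1 : N%:R * ln q <= - (lam * t) - ln q.
  have -> : - (lam * t) - ln q = (t / L%:R - 1) * ln q.
    by rewrite /lam; field; rewrite lt0r_neq0.
  rewrite ler_wnM2r //; first by apply: ltW.
  by rewrite -natr1 in NS; lra.
have : expR (N%:R * ln q) <= expR (- (lam * t) - ln q) by rewrite ler_expR.
rewrite expRD expRN lnK ?posrE // => H2.
have -> : sg 0 / q * expR (- (lam * t)) = expR (- (lam * t)) / q * sg 0 by ring.
by rewrite ler_wpM2r.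
Qed.

End Cons.
Arguments cons_sol {R I K} w nb y.
Arguments reachn {R I K} w nb hub l n.

Lemma consensus (R : realType) (I K : finType) (w : I -> K -> R) (nb : I -> K -> I)
  (hub : I) (L : nat) (y : I -> R -> R) :
  (forall n k, 0 <= w n k) -> cons_sol w nb y -> (0 < L)%N ->
  (forall n, exists l, (l <= L)%N /\ reachn w nb hub l n) ->
  exists Lc C lam, 0 < lam /\
    forall n t, 0 <= t -> `|y n t - Lc| <= C * expR (- (lam * t)).
Proof.
move=> w0 Hy L0 Hr.
pose alpha := \big[Num.min/1]_(p : I * K | 0 < w p.1 p.2) w p.1 p.2.
have a0 : 0 < alpha by apply: lt_bigmin => // p; case/andP.
have ale n k : 0 < w n k -> alpha <= w n k.
  by move=> H; exact: (@bigmin_le_cond _ _ _ 1 (n, k) (fun p => 0 < w p.1 p.2) (fun p => w p.1 p.2) H).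
pose D := \sum_n \sum_k w n k.
have D0 : 0 <= D by apply: sumr_ge0 => i _; apply: sumr_ge0 => k _.
have Dge n : \sum_k w n k <= D.
  rewrite /D (bigD1 n) //= lerDl; apply: sumr_ge0 => i _; exact: sumr_ge0.
exact: (@cons_conv R I K w nb w0 hub L alpha D a0 ale D0 Dge Hr y Hy L0).
Qed.

End PB.
Import PB.

Module PD.
Local Open Scope ring_scope.
Local Open Scope classical_set_scope.

Section Hlp.
Context {R : realType}.

Lemma entry_le_norm {m n} (M : 'M[R]_(m, n)) i j : `|M i j| <= `|M|.
Proof.
have -> : `|M| = mx_norm M by []. rewrite mx_normrE.
exact: (@le_bigmax _ _ _ 0 (fun ij : 'I_m * 'I_n => `|M ij.1 ij.2|) (i, j)).
Qed.

Lemma norm_le_entries {m n} (M : 'M[R]_(m, n)) B : 0 <= B ->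
  (forall i j, `|M i j| <= B) -> `|M| <= B.
Proof.
move=> B0 H; have -> : `|M| = mx_norm M by []. rewrite mx_normrE.
by apply: bigmax_le => // ij _; apply: H.
Qed.

Lemma is_derive_entry {k} (f : R -> 'cV[R]_k) df (t : R) l :
  is_derive t (1:R) f df -> is_derive t (1:R) (fun s => f s l 0) (df l 0).
Proof.
move=> [Hd Hv].
have cv : (fun h : R => h^-1 *: (f (h *: 1 + t) - f t)) @ 0^' --> df.
  by rewrite -Hv; exact: Hd.
have cv2 : (fun h : R => h^-1 *: (f (h *: 1 + t) l 0 - f t l 0)) @ 0^' --> df l 0.
  apply/cvgrPdist_le => eps eps0.
  move/cvgrPdist_le : cv => /(_ eps eps0).
  apply: filterS => h Hh.
  apply: le_trans Hh.
  have := entry_le_norm (df - h^-1 *: (f (h *: 1 + t) - f t))%R l 0.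
  by rewrite !mxE.
apply: DeriveDef; first by apply/cvg_ex; exists (df l 0).
exact: cvg_lim cv2.
Qed.

Lemma is_derive_mx {k} (A : 'M[R]_k) (f : R -> 'cV[R]_k) df (t : R) c :
  is_derive t (1:R) f df ->
  is_derive t (1:R) (fun s => (A *m f s) c 0) ((A *m df) c 0).
Proof.
move=> H.
have -> : (fun s => (A *m f s) c 0) = (fun s => \sum_(l <- index_enum 'I_k) A c l * f s l 0).
  by apply: funext => s; rewrite mxE.
rewrite mxE.
apply: is_derive_sumseq => l.
have := is_derive_mul (is_derive_cst (A c l) t 1) (@is_derive_entry _ f df t l H).
by rewrite mulr0 addr0.
Qed.

Lemma entry_bound {k} (A : 'M[R]_k) (v : 'cV[R]_k) B c :
  (forall l, `|v l 0| <= B) -> `|(A *m v) c 0| <= (\sum_l `|A c l|) * B.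
Proof.
move=> H; rewrite mxE mulr_suml; apply: le_trans (ler_norm_sum _ _ _) _.
apply: ler_sum => l _; rewrite normrM; apply: ler_wpM2l => //.
Qed.

Lemma vanish (d K0 lam : R) : 0 < lam ->
  (forall t, 0 <= t -> `|d| <= K0 * expR (- (lam * t))) -> d = 0.
Proof.
move=> l0 H; apply/eqP; rewrite -normr_eq0; apply/negPn/negP => dn0.
have dp : 0 < `|d| by rewrite normr_gt0 -normr_eq0.
have := H 0 (lexx 0); rewrite mulr0 oppr0 expR0 mulr1 => K0d.
have K0p : 0 < K0 by apply: lt_le_trans K0d.
pose t := K0 / (lam * `|d|).
have t0 : 0 <= t by apply: divr_ge0; [exact: ltW | apply: mulr_ge0; apply: ltW].
have := H t t0.
have e1 := expR_ge1Dx (lam * t).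
have ep := expR_gt0 (lam * t).
rewrite expRN.
have lt : lam * t = K0 / `|d| by rewrite /t; field; rewrite ?gt_eqF.
rewrite lt in e1 ep *.
move=> Hc.
have : `|d| * expR (K0 / `|d|) <= K0 by rewrite -ler_pdivlMr // ; apply: le_trans Hc _; rewrite lexx.
have : `|d| * (1 + K0 / `|d|) <= `|d| * expR (K0 / `|d|) by rewrite ler_pM2l.
have -> : `|d| * (1 + K0 / `|d|) = `|d| + K0 by field; rewrite gt_eqF.
lra.
Qed.

Lemma mxEB {m n} (M1 M2 : 'M[R]_(m, n)) i j : (M1 - M2) i j = M1 i j - M2 i j.
Proof. by rewrite !mxE. Qed.

End Hlp.

End PD.
Import PD.

Module PC.
Set Implicit Arguments. Unset Strict Implicit.
Local Open Scope ring_scope.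

Section SW.
Variables (R : realType) (N k : nat) (e : rel 'I_N) (rho : 'I_N -> 'I_N -> 'M[R]_k).
Variable (G : seq 'M[R]_k).
Implicit Types (u w : 'I_N) (s : seq ('I_N * bool)).
Hypothesis HG : point_group G.
Hypothesis HrhoG : forall i j, e i j -> rho i j \in G.

Lemma G1 : 1%:M \in G. Proof. by case: HG. Qed.
Lemma GM A B : A \in G -> B \in G -> A *m B \in G. Proof. by case: HG => _ H _ _; apply: H. Qed.
Lemma GV A : A \in G -> invmx A \in G. Proof. by case: HG => _ _ H _; apply: H. Qed.
Lemma GT A : A \in G -> A *m A^T = 1%:M. Proof. by case: HG => _ _ _ H; apply: H. Qed.
Lemma GU A : A \in G -> A \in unitmx. Proof. by move=> /GT /mulmx1_unit []. Qed.
Lemma GTl A : A \in G -> A^T *m A = 1%:M. Proof. by move=> /GT /mulmx1C. Qed.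

Lemma sw_cat u (s1 s2 : seq ('I_N * bool)) : semiwalk_ok e u (s1 ++ s2) =
  semiwalk_ok e u s1 && semiwalk_ok e (sw_end u s1) s2.
Proof.
elim: s1 u => [|[w b] s1 IH] u //=.
by rewrite IH /sw_end /= andbA.
Qed.

Lemma sw_end_cat u (s1 s2 : seq ('I_N * bool)) : sw_end (sw_end u s1) s2 = sw_end u (s1 ++ s2).
Proof. by rewrite /sw_end map_cat last_cat. Qed.

Lemma sw_end_cons u w b s : sw_end u ((w, b) :: s) = sw_end w s.
Proof. by []. Qed.

Lemma volt_cat u (s1 s2 : seq ('I_N * bool)) : sw_volt rho u (s1 ++ s2) =
  sw_volt rho u s1 *m sw_volt rho (sw_end u s1) s2.
Proof.
elim: s1 u => [|[w b] s1 IH] u /=; first by rewrite mul1mx.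
by rewrite IH mulmxA.
Qed.

Lemma volt_G u s : semiwalk_ok e u s -> sw_volt rho u s \in G.
Proof.
elim: s u => [|[w b] s IH] u /=; first by move=> _; exact: G1.
case/andP=> Hb Hs; apply: GM; last exact: IH.
by case: b Hb => H; [exact: HrhoG | apply: GV; exact: HrhoG].
Qed.

Fixpoint rev_sw (u : 'I_N) (s : seq ('I_N * bool)) : seq ('I_N * bool) :=
  match s with
  | [::] => [::]
  | (w, b) :: s' => rev_sw w s' ++ [:: (u, ~~ b)]
  end.

Lemma rev_sw_end u s : sw_end (sw_end u s) (rev_sw u s) = u.
Proof.
elim: s u => [|[w b] s IH] u; first by rewrite /sw_end.
by rewrite [rev_sw u _]/= -(sw_end_cat (sw_end u ((w,b)::s)) (rev_sw w s)) sw_end_cons.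
Qed.

Lemma rev_sw_ok u s : semiwalk_ok e u s -> semiwalk_ok e (sw_end u s) (rev_sw u s).
Proof.
elim: s u => [|[w b] s IH] u //=.
case/andP=> Hb Hs; rewrite sw_cat sw_end_cons IH //= rev_sw_end /= andbT.
by case: b Hb.
Qed.

Lemma rev_sw_volt u s : semiwalk_ok e u s ->
  sw_volt rho u s *m sw_volt rho (sw_end u s) (rev_sw u s) = 1%:M.
Proof.
elim: s u => [|[w b] s IH] u /=; first by move=> _; rewrite mul1mx.
case/andP=> Hb Hs; rewrite sw_end_cons volt_cat rev_sw_end /= mulmx1.
rewrite -mulmxA (mulmxA (sw_volt rho w s)) IH // mul1mx.
case: b Hb => /= H.
  by rewrite mulmxV //; apply: GU; exact: HrhoG.
by rewrite mulVmx //; apply: GU; exact: HrhoG.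
Qed.

Lemma inv_eq (A B : 'M[R]_k) : A *m B = 1%:M -> invmx A = B.
Proof.
move=> H; have [uA _] := mulmx1_unit H.
by rewrite -[invmx A]mulmx1 -H mulmxA mulVmx // mul1mx.
Qed.

Lemma rev_sw_voltV u s : semiwalk_ok e u s ->
  sw_volt rho (sw_end u s) (rev_sw u s) = invmx (sw_volt rho u s).
Proof. by move=> H; apply/esym/inv_eq/rev_sw_volt. Qed.

End SW.

End PC.
Import PC.

Module PE.
Set Implicit Arguments. Unset Strict Implicit.
Local Open Scope ring_scope.

Section Main.
Variables (R : realType) (N k : nat) (e : rel 'I_N) (rho : 'I_N -> 'I_N -> 'M[R]_k).
Variables (G : seq 'M[R]_k) (a : 'I_N -> 'I_N -> R) (x : 'I_N -> R -> 'cV[R]_k).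
Hypothesis HG : point_group G.
Hypothesis HrhoG : forall i j, e i j -> rho i j \in G.
Hypothesis Ha : forall i j, e i j -> 0 < a i j.
Variable r : 'I_N.
Hypothesis HH : forall A, local_group e rho r A <-> dlocal_group e rho r A.
Variable sp : 'I_N -> seq ('I_N * bool).
Hypothesis Hsp : forall i, [/\ semiwalk_ok e i (sp i), is_walk (sp i) & sw_end i (sp i) = r].
Hypothesis Hx : forall i t, is_derive t (1 : R) (x i)
     (\sum_(j | e i j) a i j *: (rho i j *m x j t - x i t)).

Definition Hg A := local_group e rho r A.
Definition pi i := sw_volt rho i (sp i).
Definition gam i j := invmx (pi i) *m rho i j *m pi j.

Lemma sp_ok i : semiwalk_ok e i (sp i). Proof. by case: (Hsp i). Qed.
Lemma sp_walk i : is_walk (sp i). Proof. by case: (Hsp i). Qed.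
Lemma sp_end i : sw_end i (sp i) = r. Proof. by case: (Hsp i). Qed.

Lemma pi_G i : pi i \in G. Proof. exact: (volt_G HG HrhoG (sp_ok i)). Qed.
Lemma pi_U i : pi i \in unitmx. Proof. exact: (GU HG (pi_G i)). Qed.

Definition rs i := rev_sw i (sp i).
Lemma rs_ok i : semiwalk_ok e r (rs i).
Proof. by have := rev_sw_ok (sp_ok i); rewrite sp_end. Qed.
Lemma rs_end i : sw_end r (rs i) = i.
Proof. by have := rev_sw_end i (sp i); rewrite sp_end. Qed.
Lemma rs_volt i : sw_volt rho r (rs i) = invmx (pi i).
Proof. by have := rev_sw_voltV HG HrhoG (sp_ok i); rewrite sp_end. Qed.

(* a semiwalk from r through i, a closed part at i, and back *)
Lemma Hg_conj i s : semiwalk_ok e i s -> sw_end i s = i ->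
  Hg (invmx (pi i) *m sw_volt rho i s *m pi i).
Proof.
move=> ok en; exists (rs i ++ (s ++ sp i)); split.
- by rewrite sw_cat rs_ok rs_end sw_cat ok en sp_ok.
- by rewrite -sw_end_cat rs_end -sw_end_cat en sp_end.
- by rewrite volt_cat rs_end volt_cat en rs_volt mulmxA.
Qed.

Lemma Hg_G A : Hg A -> A \in G.
Proof. by case=> s [ok _ <-]; exact: (volt_G HG HrhoG ok). Qed.

Lemma Hg1 : Hg 1%:M.
Proof. by exists [::]. Qed.

Lemma HgM A B : Hg A -> Hg B -> Hg (A *m B).
Proof.
case=> s1 [ok1 en1 <-] [s2 [ok2 en2 <-]]; exists (s1 ++ s2); split.
- by rewrite sw_cat ok1 en1.
- by rewrite -sw_end_cat en1.
- by rewrite volt_cat en1.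
Qed.

Lemma HgV A : Hg A -> Hg (invmx A).
Proof.
case=> s [ok en <-]; exists (rev_sw r s); split.
- by have := rev_sw_ok ok; rewrite en.
- by have := rev_sw_end r s; rewrite en.
- by have := rev_sw_voltV HG HrhoG ok; rewrite en.
Qed.

Lemma gam_H i j : e i j -> Hg (gam i j).
Proof.
move=> eij; exists (rs i ++ ((j, true) :: sp j)); split.
- by rewrite sw_cat rs_ok rs_end /= eij sp_ok.
- by rewrite -sw_end_cat rs_end sw_end_cons sp_end.
- by rewrite volt_cat rs_end rs_volt /= mulmxA.
Qed.

Lemma pi_H : Hg (pi r).
Proof. by exists (sp r); rewrite sp_ok sp_end. Qed.

Definition Hs := undup [seq A <- G | `[< Hg A >]].
Lemma mem_Hs A : (A \in Hs) = (A \in G) && `[< Hg A >].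
Proof. by rewrite mem_undup mem_filter andbC. Qed.
Lemma Hs_H A : A \in Hs -> Hg A.
Proof. by rewrite mem_Hs => /andP[_ /asboolP]. Qed.
Lemma H_Hs A : Hg A -> A \in Hs.
Proof. by move=> h; rewrite mem_Hs (Hg_G h) /=; apply/asboolP. Qed.
Lemma Hs_uniq : uniq Hs. Proof. exact: undup_uniq. Qed.
Definition mm := (size Hs).-1.
Lemma Hs_size : size Hs = mm.+1.
Proof. by move: (H_Hs Hg1); rewrite /mm; case: Hs. Qed.
Definition hh (g : 'I_mm.+1) := nth 0 Hs g.
Lemma hh_Hs g : hh g \in Hs. Proof. by apply: mem_nth; rewrite Hs_size. Qed.
Lemma hh_H g : Hg (hh g). Proof. exact: Hs_H (hh_Hs g). Qed.
Definition idx A : 'I_mm.+1 := inord (index A Hs).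
Lemma hh_idx A : A \in Hs -> hh (idx A) = A.
Proof. by move=> h; rewrite /hh /idx inordK ?nth_index // -Hs_size index_mem. Qed.
Lemma hh_inj : injective hh.
Proof.
move=> g1 g2 E; apply/val_inj/eqP; rewrite -(nth_uniq 0 _ _ Hs_uniq) ?Hs_size ?ltn_ord //.
exact/eqP.
Qed.

Definition LI := ('I_N * 'I_mm.+1)%type.
Definition wl (n : LI) (j : 'I_N) : R := if e n.1 j then a n.1 j else 0.
Definition nbl (n : LI) (j : 'I_N) : LI :=
  if e n.1 j then (j, idx (hh n.2 *m gam n.1 j)) else n.
Definition yl (c : 'I_k) (n : LI) (t : R) : R := (hh n.2 *m invmx (pi n.1) *m x n.1 t) c 0.

Lemma wl_ge0 n j : 0 <= wl n j.
Proof. by rewrite /wl; case: ifP => // ej; apply: ltW; apply: Ha. Qed.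

Lemma hh_step g i j : e i j -> hh (idx (hh g *m gam i j)) = hh g *m gam i j.
Proof. by move=> ej; apply: hh_idx; apply: H_Hs; apply: HgM; [exact: hh_H | exact: gam_H]. Qed.

Lemma gam_pi i j : gam i j *m invmx (pi j) = invmx (pi i) *m rho i j.
Proof. by rewrite /gam mulmxK // pi_U. Qed.

Lemma yl_sol c : cons_sol wl nbl (yl c).
Proof.
move=> [i g] t /=.
have := is_derive_mx (hh g *m invmx (pi i)) (x i) _ t c (Hx i t).
suff -> : ((hh g *m invmx (pi i)) *m \sum_(j | e i j) a i j *: (rho i j *m x j t - x i t)) c 0
   = \sum_j wl (i, g) j * (yl c (nbl (i, g) j) t - yl c (i, g) t) by [].
rewrite [RHS](bigID (fun j => e i j)) /= [X in _ = _ + X]big1 ?addr0; last first.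
  by move=> j /negbTE ej; rewrite /wl /= ej mul0r.
rewrite mulmx_sumr summxE; apply: eq_bigr => j ej.
rewrite /wl /nbl /yl /= ej hh_step // -scalemxAr mxE mulmxBr mxE.
rewrite [X in _ * (_ + X) = _]mxE /=. congr (_ * (_ - _)).
by rewrite -(mulmxA (hh g) (gam i j)) gam_pi !mulmxA.
Qed.

Lemma hh_U g : hh g \in unitmx.
Proof. have H1 := Hg_G (hh_H g). have H2 := GU HG H1. exact: H2. Qed.

Lemma lift_walk s : forall u g g', semiwalk_ok e u s -> is_walk s ->
  hh g' = hh g *m invmx (pi u) *m sw_volt rho u s *m pi (sw_end u s) ->
  reachn wl nbl (sw_end u s, g') (size s) (u, g).
Proof.
elim: s => [|[j b] s IH] u g g'.
  move=> _ _ /=; rewrite /sw_end /= mulmx1 (mulmxKV (pi_U u)) => /hh_inj ->.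
  by [].
rewrite [semiwalk_ok _ _ _]/= [is_walk _]/= => /andP[Hb ok] /andP[/= bt wk].
rewrite bt in Hb; rewrite [sw_volt _ _ _]/= bt => Hg'.
exists j; split; first by rewrite /wl /= Hb; apply: Ha.
rewrite /nbl /= Hb sw_end_cons.
apply: IH => //.
rewrite hh_step // Hg'.
by rewrite -(mulmxA (hh g) (gam u j)) gam_pi !mulmxA.
Qed.

Definition hubl : LI := (r, idx 1%:M).

Lemma hh1 : hh (idx 1%:M) = 1%:M.
Proof. exact: hh_idx (H_Hs Hg1). Qed.

Lemma reach_all n : exists l, reachn wl nbl hubl l n.
Proof.
case: n => i g.
have HB : Hg (invmx (hh g) *m invmx (pi r)) by apply: HgM; apply: HgV; [exact: hh_H | exact: pi_H].
have [c [okc wc enc vc]] := (HH _).1 HB.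
exists (size (sp i ++ c)).
have en : sw_end i (sp i ++ c) = r by rewrite -sw_end_cat sp_end enc.
rewrite /hubl -[in X in reachn _ _ X _ _]en.
apply: lift_walk.
- by rewrite sw_cat sp_ok sp_end okc.
- by rewrite /is_walk all_cat; apply/andP; split; [exact: sp_walk | exact: wc].
rewrite hh1 en volt_cat sp_end vc -/(pi i).
rewrite !mulmxA mulmxKV ?pi_U // (mulmxKV (pi_U i)) mulmxV //; exact: hh_U.
Qed.

Lemma main_result : exists (xs : 'I_N -> 'cV[R]_k) (C lam : R),
    [/\ 0 < lam,
        (forall i t, 0 <= t -> `|x i t - xs i| <= C * expR (- (lam * t))),
        (forall i j, e i j -> xs i = rho i j *m xs j),
        (forall i j, (xs i)^T *m xs i = (xs j)^T *m xs j)
      & (forall i A, local_group e rho i A -> A *m xs i = xs i)].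
Proof.
have [f Hf] := boolp.choice reach_all.
pose L := (\max_(n : LI) f n).+1.
have reachL n : exists l, (l <= L)%N /\ reachn wl nbl hubl l n.
  by exists (f n); split; [apply: leqW; exact: (leq_bigmax n) | exact: Hf].
have Hc c : exists p : R * R * R, 0 < p.2 /\
    forall n t, 0 <= t -> `|yl c n t - p.1.1| <= p.1.2 * expR (- (p.2 * t)).
  have [Lc [C [lam [l0 H]]]] := @consensus R LI 'I_N wl nbl hubl L (yl c) wl_ge0 (yl_sol c) (ltn0Sn _) reachL.
  by exists (Lc, C, lam).
have [F HF] := boolp.choice Hc.
pose C0 := \big[Num.max/0]_c (F c).1.2.
pose lam := \big[Num.min/1]_c (F c).2.
have lam0 : 0 < lam by apply: lt_bigmin => // c _; case: (HF c).
have C00 : 0 <= C0 by exact: bigmax_ge_id.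
pose B t := C0 * expR (- (lam * t)).
have B0 t : 0 <= B t by apply: mulr_ge0 => //; apply: ltW; apply: expR_gt0.
have Hb c n t : 0 <= t -> `|yl c n t - (F c).1.1| <= B t.
  move=> t0; case: (HF c) => lc H; apply: le_trans (H n t t0) _.
  have Cc : (F c).1.2 <= C0 by exact: (@le_bigmax _ _ _ 0 (fun c => (F c).1.2) c).
  have lc' : lam <= (F c).2 by exact: (@bigmin_le _ _ _ 1 c (fun c => (F c).2)).
  have Ec : expR (- ((F c).2 * t)) <= expR (- (lam * t)).
    by rewrite ler_expR lerN2 ler_wpM2r.
  apply: le_trans (_ : C0 * expR (- ((F c).2 * t)) <= _).
    by apply: ler_wpM2r => //; apply: ltW; apply: expR_gt0.
  exact: ler_wpM2l.
pose us : 'cV[R]_k := \col_c (F c).1.1.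
have v_bound i t l : 0 <= t -> `|(invmx (pi i) *m x i t) l 0 - us l 0| <= B t.
  move=> t0; have := Hb l (i, idx 1%:M) t t0.
  by rewrite /yl /= hh1 mul1mx /us mxE.
have Hfix A : Hg A -> A *m us = us.
  move=> hA; apply/matrixP => c j; rewrite (ord1 j).
  apply/eqP; rewrite -subr_eq0; apply/eqP.
  apply: (@vanish _ _ ((\sum_l `|A c l|) * C0 + C0) lam lam0) => t t0.
  pose v := invmx (pi r) *m x r t.
  have E1 : (A *m us) c 0 - us c 0 = (A *m (us - v)) c 0 + ((A *m v) c 0 - us c 0).
    by rewrite mulmxBr mxEB; ring.
  rewrite E1; apply: le_trans (ler_normD _ _) _.
  rewrite mulrDl; apply: lerD.
    rewrite -mulrA; apply: entry_bound => l.
    rewrite mxEB distrC; exact: v_bound.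
  have := Hb c (r, idx A) t t0.
  by rewrite /yl /= hh_idx ?H_Hs // -mulmxA /us mxE.
pose xs i := pi i *m us.
pose P := \sum_i \sum_c \sum_l `|pi i c l|.
exists xs, (P * C0), lam; split => //.
- move=> i t t0.
  have -> : x i t - xs i = pi i *m (invmx (pi i) *m x i t - us).
    by rewrite mulmxBr mulKVmx ?pi_U.
  rewrite -mulrA; apply: norm_le_entries.
    apply: mulr_ge0; last exact: B0.
    by apply: sumr_ge0 => ? _; apply: sumr_ge0 => ? _; apply: sumr_ge0.
  move=> c j; rewrite (ord1 j).
  apply: le_trans (entry_bound _ _ _ c _) _.
    by move=> l; rewrite mxEB; exact: v_bound.
  apply: ler_wpM2r; first exact: B0.
  apply: le_trans (_ : \sum_c0 \sum_l `|pi i c0 l| <= P).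
    by rewrite [X in _ <= X](bigD1 c) //= lerDl; apply: sumr_ge0 => ? _; apply: sumr_ge0.
  by rewrite /P [X in _ <= X](bigD1 i) //= lerDl; apply: sumr_ge0 => ? _; apply: sumr_ge0 => ? _; apply: sumr_ge0.
- move=> i j eij; rewrite /xs -{1}(Hfix _ (gam_H eij)) /gam.
  by rewrite !mulmxA mulmxV ?pi_U // mul1mx.
- move=> i j; rewrite /xs !trmx_mul -!mulmxA !(mulmxA (pi _)^T) !(GTl HG (pi_G _)).
  by rewrite !mul1mx.
- move=> i A [s [ok en <-]].
  have := Hfix _ (Hg_conj ok en).
  rewrite /xs => H; rewrite -{2}H.
  by rewrite !mulmxA mulmxV ?pi_U // mul1mx.
Qed.

End Main.

End PE.
Import PE.

Theorem theorem4 (R : realType) (N k : nat) (e : rel 'I_N)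
  (rho : 'I_N -> 'I_N -> 'M[R]_k) (G : seq 'M[R]_k)
  (a : 'I_N -> 'I_N -> R)
  (x : 'I_N -> R -> 'cV[R]_k) :
  irreflexive e ->
  point_group G ->
  (forall i j, e i j -> rho i j \in G) ->
  (forall i j, e i j -> 0 < a i j) ->
  (exists r, is_root e r /\
     (forall A, local_group e rho r A <-> dlocal_group e rho r A)) ->
  (forall i t, is_derive t (1 : R) (x i)
     (\sum_(j | e i j) a i j *: (rho i j *m x j t - x i t))) ->
  exists (xs : 'I_N -> 'cV[R]_k) (C lam : R),
    [/\ 0 < lam,
        (forall i t, 0 <= t -> `|x i t - xs i| <= C * expR (- (lam * t))),
        (forall i j, e i j -> xs i = rho i j *m xs j),
        (forall i j, (xs i)^T *m xs i = (xs j)^T *m xs j)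
      & (forall i A, local_group e rho i A -> A *m xs i = xs i)].
Proof.
move=> _ HG HrhoG Ha [r [Hroot HH]] Hx.
have Hp : forall i, exists s, [/\ semiwalk_ok e i s, is_walk s & sw_end i s = r].
  by move=> i; have [s [ok w _ en]] := Hroot i; exists s.
have [sp Hsp] := boolp.choice Hp.
exact: (main_result HG HrhoG Ha HH Hsp Hx).
Qed.
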